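(* Let $p$ be an odd prime with $p\equiv 1\pmod 4$ such that a perfect $B[-1,3](p)$ set exists. Then the multiplicative order of $-\tfrac23$ (i.e. of $-2\cdot 3^{-1}\bmod p$) in $\mathbb{Z}_p^\ast$ is odd.
   Context: $\mathbb{Z}_p^\ast$ is the multiplicative group of nonzero residues modulo $p$. A set $B\subseteq\mathbb{Z}_p$ is a perfect $B[-1,3](p)$ set if every nonzero element of $\mathbb{Z}_p$ has a unique representation $ab \bmod p$ with $a\in\{-1,1,2,3\}$ and $b\in B$ (and $0$ has no such representation); equivalently $B\subseteq\mathbb{Z}_p^\ast$, $|B|=(p-1)/4$, and the sets $\{-b,b,2b,3b\}$, $b\in B$, partition $\mathbb{Z}_p^\ast$. *)

(* Defs.v *)
From HB Require Import structures.
From mathcomp Require Import all_boot all_order all_algebra all_fingroup.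
Set Implicit Arguments. Unset Strict Implicit. Unset Printing Implicit Defensive.
Import GRing.Theory.
Local Open Scope ring_scope.

Definition mult_set (R : nzRingType) (i : 'I_4) : R :=
  match val i with 0%N => -1 | 1%N => 1 | 2%N => 2%:R | _ => 3%:R end.

Definition nreps (p : nat) (B : {set 'F_p}) (x : 'F_p) : nat :=
  #|[set ab : 'I_4 * 'F_p | (ab.2 \in B) && (x == mult_set _ ab.1 * ab.2)]|.

(* perfect B[-1,3](p) set: every nonzero residue has exactly one
   representation a*b, and 0 has none *)
Definition perfect_B13 (p : nat) (B : {set 'F_p}) : Prop :=
  forall x : 'F_p, nreps B x = (x != 0 : nat).

(* multiplicative order of a unit x of 'F_p in the unit group (1 if x is not a unit) *)
Definition mord (p : nat) (x : 'F_p) : nat :=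
  #[insubd (1 : {unit 'F_p}) x]%g.

(* Main.v *)
Require Import Defs.
From HB Require Import structures.
From mathcomp Require Import all_boot all_order all_algebra all_fingroup.
From mathcomp Require Import zify.
From mathcomp Require Import cyclic.
Import GRing.Theory.
Local Open Scope ring_scope.

Theorem lemma4p5 (p : nat) (pr_p : prime p) (p_odd : odd p) (p_mod4 : (p %% 4 = 1)%N)
  (B : {set 'F_p}) (HB : perfect_B13 B) :
  odd (mord (- 2%:R / 3%:R : 'F_p)).
Proof.
have chp := pchar_Fp pr_p.
have p_gt3 : (3 < p)%N.
  have p2 := prime_gt1 pr_p.
  case: p p2 pr_p p_mod4 {chp B HB p_odd} => [|[|[|[|]]]] //.
have n2 : (2%:R : 'F_p) != 0.
  rewrite -(dvdn_pcharf chp); apply/negP => /dvdn_leq; lia.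
have n3 : (3%:R : 'F_p) != 0.
  rewrite -(dvdn_pcharf chp); apply/negP => /dvdn_leq; lia.
pose S x := [set ab : 'I_4 * 'F_p | (ab.2 \in B) && (x == mult_set _ ab.1 * ab.2)].
have uniq_rep : forall i j b1 b2, b1 \in B -> b2 \in B ->
    mult_set _ i * b1 = mult_set _ j * b2 -> (i, b1) = (j, b2).
  move=> i j b1 b2 h1 h2 e.
  have hc : (#|S (mult_set _ i * b1)%R| <= 1)%N.
    have := HB (mult_set _ i * b1); rewrite /nreps => ->; by case: (_ != 0).
  move/card_le1_eqP: hc => H; by apply: H; rewrite inE /= ?h1 ?h2 /= -?e eqxx.
have ex_rep : forall x : 'F_p, x != 0 -> exists i b, b \in B /\ x = mult_set _ i * b.
  move=> x x0; have := HB x; rewrite x0 /nreps => hc.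
  have : (0 < #|S x|)%N by rewrite /S hc.
  case/card_gt0P => -[i0 b0]; rewrite inE /= => /andP[hb /eqP ->].
  by exists i0, b0.
have notB0 : (0 : 'F_p) \notin B.
  apply/negP => h0; have := HB 0; rewrite eqxx /nreps /=.
  have : (0 < #|S 0%R|)%N.
    apply/card_gt0P; exists (@Ordinal 4 1 isT, 0); rewrite inE /= h0 mulr0 eqxx //.
  by rewrite /S => /[swap] ->.
pose g : 'F_p := - 2%:R / 3%:R.
have g0 : g != 0 by rewrite /g mulf_neq0 ?oppr_eq0 ?invr_eq0.
have closed : forall b, b \in B -> g * b \in B.
  move=> b hb; have b0 : b != 0 by apply: contraNneq notB0 => <-.
  have x0 : - 2%:R * b != 0 by rewrite mulf_neq0 ?oppr_eq0.
  case: (ex_rep _ x0) => i [b' [hb' e]].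
  case: i e => [[|[|[|[|]]]] //] Hi e.
  -
    have : (@Ordinal 4 1 isT, b') = (@Ordinal 4 2 isT, b).
      apply: uniq_rep => //; rewrite /mult_set /=.
      by move: e; rewrite /mult_set /= !mulN1r mulNr => /eqP; rewrite eqr_opp mul1r => /eqP <-.
    by case.
  - have : (@Ordinal 4 0 isT, b') = (@Ordinal 4 2 isT, b).
      apply: uniq_rep => //; rewrite /mult_set /=.
      by move: e; rewrite /mult_set /= mul1r => <-; rewrite mulN1r mulNr opprK.
    by case.
  - have : (@Ordinal 4 1 isT, b') = (@Ordinal 4 0 isT, b).
      apply: uniq_rep => //; rewrite /mult_set /= mul1r mulN1r.
      move: e; rewrite /mult_set /= mulNr => /(congr1 (fun y => 2%:R^-1 * y)).
      by rewrite !mulrA mulrN mulKf // mulVf // mul1r.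
    by case.
  - have -> : g * b = b'.
      move: e; rewrite /mult_set /= => /(congr1 (fun y => 3%:R^-1 * y)).
      rewrite mulKf // => <-.
      by rewrite /g mulrA (mulrC 3%:R^-1).
    done.
have hb1 : exists b, b \in B.
  have : (1 : 'F_p) != 0 by exact: oner_neq0.
  by case/ex_rep => i [b [hb _]]; exists b.
case: hb1 => b hb.
have closedX : forall k, g ^+ k * b \in B.
  elim=> [|k IH]; first by rewrite mul1r.
  by rewrite exprS -mulrA closed.
rewrite /mord.
set u := insubd _ _.
have vu : val u = g by rewrite /u insubdK // unitfE.
have [//|ev] := boolP (odd #[u]%g).
have n0 : (0 < #[u]%g)%N := order_gt0 u.
set n := #[u]%g in ev n0.
have [m Hm] : exists m, n = (m * 2)%N.
  by exists n./2; rewrite -[n in LHS](odd_double_half n) (negbTE ev) add0n -muln2.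
have hm : (g ^+ m) ^+ 2 = 1.
  by rewrite -exprM -vu -FinRing.val_unitX -Hm expg_order.
have hm1 : g ^+ m != 1.
  apply/eqP => e.
  have : (n %| m)%N.
    rewrite order_dvdn; apply/eqP/val_inj; by rewrite FinRing.val_unitX vu e.
  move/dvdn_leq; rewrite Hm; lia.
have gm : g ^+ m = -1.
  by move/eqP: hm; rewrite sqrf_eq1 (negbTE hm1) /= => /eqP.
have := closedX m; rewrite gm => hnb.
have : (@Ordinal 4 0 isT, b) = (@Ordinal 4 1 isT, - b).
  apply: uniq_rep => //; first by rewrite mulN1r in hnb.
  rewrite /mult_set /=. by rewrite mulN1r mul1r.
by case.
Qed.
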